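(* Let $P\in S^n$. Then: (1) $\overline{\mathcal{H}_{\rm Wulff}(S^n,P)}\subset\mathcal{H}^\circ(S^n)$; (2) $\bigcirc(\mathcal{H}_{\rm Wulff}(S^n,P))=\mathcal{H}_{\rm Wulff}(S^n,P)$; (3) $\bigcirc(\overline{\mathcal{H}_{\rm Wulff}(S^n,P)})=\overline{\mathcal{H}_{\rm Wulff}(S^n,P)}$; (4) the restriction of $\bigcirc$ to $\overline{\mathcal{H}_{\rm Wulff}(S^n,P)}$ is injective. Here $\bigcirc(W)=W^\circ$.
   Context: $S^n$ is the unit sphere in $\mathbb{R}^{n+1}$, $n\ge1$; $|PQ|=\arccos(P\cdot Q)$. $H(P)=\{Q\in S^n:P\cdot Q\ge0\}$ and $W^\circ=\bigcap_{P\in W}H(P)$. $\mathcal{H}(S^n)$ is the set of non-empty closed subsets of $S^n$ with the Pompeiu-Hausdorff metric $h(A,B)=\max\{\max_{x\in A}\min_{y\in B}|xy|,\ \max_{y\in B}\min_{x\in A}|xy|\}$, and $\mathcal{H}^\circ(S^n)=\{W\in\mathcal{H}(S^n):W^\circ\ne\emptyset\}$. A subset is hemispherical if it is disjoint from $H(Q)$ for some $Q\in S^n$. For $A,B$ in a hemispherical set, the arc $AB=\{((1-t)A+tB)/\|(1-t)A+tB\|:0\le t\le1\}$; a hemispherical set $W$ is spherical convex if $AB\subset W$ for all $A,B\in W$, and a spherical convex body if moreover it is closed and has an interior point. $\mathcal{H}_{\rm Wulff}(S^n,P)$ is the set of $W\in\mathcal{H}(S^n)$ with $W\cap H(-P)=\emptyset$,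 $P$ an interior point of $W$, and $W$ a spherical convex body; $\overline{\mathcal{H}_{\rm Wulff}(S^n,P)}$ is its closure in $(\mathcal{H}(S^n),h)$. *)

(* Defs.v *)
From Stdlib Require Import Reals Lra.
Open Scope R_scope.

(* Points of R^{n+1} are functions nat -> R supported on {0,...,n}. *)
Definition vec := nat -> R.
Definition set := vec -> Prop.

Definition dot (n : nat) (x y : vec) : R := sum_f_R0 (fun i => x i * y i) n.

Definition supp (n : nat) (x : vec) : Prop := forall i, (n < i)%nat -> x i = 0.

Definition sphere (n : nat) (x : vec) : Prop := supp n x /\ dot n x x = 1.

Definition sdist (n : nat) (P Q : vec) : R := acos (dot n P Q).

Definition vopp (x : vec) : vec := fun i => - x i.

Definition hemi (n : nat) (P : vec) : set := fun Q => sphere n Q /\ dot n P Q >= 0.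

Definition polar (n : nat) (W : set) : set :=
  fun Q => sphere n Q /\ forall P, W P -> hemi n P Q.

Definition subset_of (A B : set) : Prop := forall x, A x -> B x.
Definition seteq (A B : set) : Prop := forall x, A x <-> B x.
Definition nonempty (A : set) : Prop := exists x, A x.

Definition sclosed (n : nat) (W : set) : Prop :=
  forall x, sphere n x ->
    (forall eps, eps > 0 -> exists y, W y /\ sdist n x y < eps) -> W x.

Definition HS (n : nat) (W : set) : Prop :=
  subset_of W (sphere n) /\ nonempty W /\ sclosed n W.

Definition HScirc (n : nat) (W : set) : Prop := HS n W /\ nonempty (polar n W).

(* For non-empty closed (compact) A, B in S^n this holds iff
   h(A,B) <= r, since the max/min in the definition of h are attained. *)
Definition hclose (n : nat) (A B : set) (r : R) : Prop :=
  (forall x, A x -> exists y, B y /\ sdist n x y <= r) /\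
  (forall y, B y -> exists x, A x /\ sdist n x y <= r).

Definition hdist_lt (n : nat) (A B : set) (eps : R) : Prop :=
  exists r, r < eps /\ hclose n A B r.

Definition hemispherical (n : nat) (W : set) : Prop :=
  exists Q, sphere n Q /\ forall x, W x -> ~ hemi n Q x.

Definition arcpt (n : nat) (A B : vec) (t : R) : vec :=
  let v := fun i => (1 - t) * A i + t * B i in
  fun i => v i / sqrt (dot n v v).

Definition sconvex (n : nat) (W : set) : Prop :=
  hemispherical n W /\
  forall A B, W A -> W B -> forall t, 0 <= t <= 1 -> W (arcpt n A B t).

Definition interior_pt (n : nat) (W : set) (P : vec) : Prop :=
  W P /\ exists eps, eps > 0 /\ forall Q, sphere n Q -> sdist n P Q < eps -> W Q.

Definition sconvex_body (n : nat) (W : set) : Prop :=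
  sconvex n W /\ sclosed n W /\ exists P, interior_pt n W P.

Definition HWulff (n : nat) (P : vec) (W : set) : Prop :=
  HS n W /\ (forall x, W x -> ~ hemi n (vopp P) x) /\
  interior_pt n W P /\ sconvex_body n W.

Definition HWulff_cl (n : nat) (P : vec) (W : set) : Prop :=
  HS n W /\ forall eps, eps > 0 -> exists W', HWulff n P W' /\ hdist_lt n W W' eps.

(* Main.v *)
Require Import Defs.
From Stdlib Require Import Reals Lra Lia Psatz ClassicalEpsilon FunctionalExtensionality Classical.
Open Scope R_scope.

Definition lin (a : R) (x : vec) (b : R) (y : vec) : vec := fun i => a * x i + b * y i.
Definition nrmz (n:nat) (v : vec) : vec := fun i => v i / sqrt (dot n v v).

Lemma sum_ext f g N : (forall i, (i <= N)%nat -> f i = g i) -> sum_f_R0 f N = sum_f_R0 g N.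
Proof. induction N; intros H; simpl. apply H; lia. rewrite IHN by (intros; apply H; lia). rewrite H by lia. reflexivity. Qed.

Lemma dot_sym n x y : dot n x y = dot n y x.
Proof. unfold dot; apply sum_ext; intros; ring. Qed.

Lemma dot_lin n a x b y z : dot n (lin a x b y) z = a * dot n x z + b * dot n y z.
Proof. unfold dot, lin; induction n; simpl. ring. rewrite IHn; ring. Qed.

Lemma dot_linr n a x b y z : dot n z (lin a x b y) = a * dot n z x + b * dot n z y.
Proof. rewrite dot_sym, dot_lin, (dot_sym n x), (dot_sym n y); ring. Qed.

Lemma dot_div n x c y : dot n (fun i => x i / c) y = dot n x y / c.
Proof. unfold dot; induction n; simpl. unfold Rdiv; ring. rewrite IHn; unfold Rdiv; ring. Qed.

Lemma dot_vopp n x y : dot n (vopp x) y = - dot n x y.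
Proof. unfold dot, vopp; induction n; simpl. ring. rewrite IHn; ring. Qed.

Lemma dot_pos n x : 0 <= dot n x x.
Proof. unfold dot; induction n; simpl. nra. nra. Qed.

Lemma dot_coord n x i : (i <= n)%nat -> x i * x i <= dot n x x.
Proof.
  unfold dot; induction n; intros Hi; simpl.
  - replace i with 0%nat by lia. lra.
  - assert (H0 := dot_pos n x). unfold dot in H0.
    destruct (Nat.eq_dec i (S n)) as [->|Hne]. nra.
    specialize (IHn ltac:(lia)). nra.
Qed.

Lemma dot_zero n x : dot n x x = 0 -> forall i, (i <= n)%nat -> x i = 0.
Proof.
  intros H i Hi. pose proof (dot_coord n x i Hi). nra.
Qed.

Lemma dot_zero_l n x y : (forall i, (i <= n)%nat -> x i = 0) -> dot n x y = 0.
Proof. intros H. unfold dot. induction n; simpl. rewrite H by lia; ring.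
  rewrite IHn by (intros; apply H; lia). rewrite H by lia; ring. Qed.

Lemma CS n x y : dot n x y * dot n x y <= dot n x x * dot n y y.
Proof.
  destruct (Req_dec (dot n y y) 0) as [H0|H0].
  - rewrite (dot_sym n x y), dot_zero_l. nra. apply dot_zero; auto.
  - set (a := dot n y y). set (b := dot n x y).
    pose proof (dot_pos n (lin a x (-b) y)) as H.
    rewrite dot_lin, !dot_linr, (dot_sym n y x) in H. fold a b in H.
    assert (0 < a) by (pose proof (dot_pos n y); unfold a in *; lra).
    assert (0 <= a * (a * dot n x x - b * b)) by nra.
    assert (0 <= a * dot n x x - b*b).
    { destruct (Rle_lt_dec 0 (a * dot n x x - b*b)); auto. nra. }
    nra.
Qed.

Lemma supp_lin n a x b y : supp n x -> supp n y -> supp n (lin a x b y).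
Proof. unfold supp, lin; intros Hx Hy i Hi; rewrite Hx, Hy by auto; ring. Qed.
Lemma supp_vopp n x : supp n x -> supp n (vopp x).
Proof. unfold supp, vopp; intros Hx i Hi; rewrite Hx by auto; ring. Qed.
Lemma supp_nrmz n v : supp n v -> supp n (nrmz n v).
Proof. unfold supp, nrmz; intros Hx i Hi; rewrite Hx by auto; unfold Rdiv; ring. Qed.

Lemma sphere_vopp n x : sphere n x -> sphere n (vopp x).
Proof. intros [Hs Hd]; split. apply supp_vopp; auto. rewrite dot_vopp, dot_sym, dot_vopp; lra. Qed.

Lemma dot_nrmz n v y : dot n (nrmz n v) y = dot n v y / sqrt (dot n v v).
Proof. apply dot_div. Qed.

Lemma sphere_nrmz n v : supp n v -> 0 < dot n v v -> sphere n (nrmz n v).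
Proof.
  intros Hs Hp; split. apply supp_nrmz; auto.
  rewrite dot_nrmz, dot_sym, dot_nrmz.
  pose proof (sqrt_sqrt _ (Rlt_le _ _ Hp)). pose proof (sqrt_lt_R0 _ Hp).
  unfold Rdiv. rewrite Rmult_assoc, <- Rinv_mult, H. field; lra.
Qed.

Lemma unit_bound n x y : sphere n x -> sphere n y -> -1 <= dot n x y <= 1.
Proof. intros [_ Hx] [_ Hy]. pose proof (CS n x y). rewrite Hx, Hy in H. nra. Qed.

Lemma unit_eq n x y : sphere n x -> sphere n y -> dot n x y = 1 -> x = y.
Proof.
  intros [Sx Hx] [Sy Hy] H. apply functional_extensionality; intros i.
  destruct (Compare_dec.le_lt_dec i n) as [Hi|Hi].
  - assert (E : dot n (lin 1 x (-1) y) (lin 1 x (-1) y) = 0).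
    { rewrite dot_lin, !dot_linr, (dot_sym n y x). rewrite Hx, Hy, H. ring. }
    pose proof (dot_zero _ _ E i Hi). unfold lin in H0. lra.
  - rewrite Sx, Sy by auto. reflexivity.
Qed.

Lemma near_tri n x y z : sphere n x -> sphere n y -> sphere n z ->
  1 - dot n x z <= 2 * (1 - dot n x y) + 2 * (1 - dot n y z).
Proof.
  intros [_ Hx] [_ Hy] [_ Hz].
  pose proof (dot_pos n (lin 1 (lin 1 x (-2) y) 1 z)) as H.
  repeat rewrite ?dot_lin, ?dot_linr in H.
  rewrite (dot_sym n y x), (dot_sym n z x), (dot_sym n z y) in H. lra.
Qed.

Lemma dot_diff n a x y : sphere n x -> sphere n y ->
  (dot n a x - dot n a y) * (dot n a x - dot n a y) <= dot n a a * (2 * (1 - dot n x y)).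
Proof.
  intros [_ Hx] [_ Hy]. pose proof (CS n a (lin 1 x (-1) y)) as H.
  rewrite !dot_linr, !dot_lin, (dot_sym n y x) in H. rewrite Hx, Hy in H.
  replace (2 * (1 - dot n x y)) with (1 * (1 * 1 + -1 * dot n x y) + -1 * (1 * dot n x y + -1 * 1)) by ring.
  nra.
Qed.

Lemma nrmz_scal n c v : 0 < c -> 0 < dot n v v -> nrmz n (lin c v 0 v) = nrmz n v.
Proof.
  intros Hc Hv. apply functional_extensionality; intros i. unfold nrmz.
  rewrite dot_lin, !dot_linr. replace (c * (c * dot n v v + 0 * dot n v v) + 0 * (c * dot n v v + 0 * dot n v v)) with ((c*c) * dot n v v) by ring.
  rewrite sqrt_mult by nra. rewrite sqrt_square by lra. unfold lin.
  pose proof (sqrt_lt_R0 _ Hv). field. lra.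
Qed.

Lemma normnear n x u d eta : sphere n x -> dot n u u <= d -> 0 <= d -> d <= 1/4 -> 8 * d < eta ->
  0 < dot n (lin 1 x 1 u) (lin 1 x 1 u) /\ dot n x (nrmz n (lin 1 x 1 u)) > 1 - eta.
Proof.
  intros [Sx Hx] Hu Hd0 Hd1 Heta.
  set (p := dot n x u).
  assert (Hp' : p * p <= dot n u u). { pose proof (CS n x u). fold p in H. rewrite Hx in H. lra. }
  assert (Hp : p * p <= d) by lra.
  assert (Hvv : dot n (lin 1 x 1 u) (lin 1 x 1 u) = 1 + 2 * p + dot n u u).
  { rewrite dot_lin, !dot_linr, (dot_sym n u x). fold p. rewrite Hx. ring. }
  assert (Hp2 : -1/2 <= p) by nra.
  assert (Hpos : 0 < dot n (lin 1 x 1 u) (lin 1 x 1 u)).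
  { rewrite Hvv. pose proof (dot_pos n u). nra. }
  split; auto.
  rewrite dot_sym, dot_nrmz, dot_lin, (dot_sym n u x). fold p. rewrite Hx.
  set (s := sqrt (dot n (lin 1 x 1 u) (lin 1 x 1 u))).
  assert (Hs : s * s = dot n (lin 1 x 1 u) (lin 1 x 1 u)) by (apply sqrt_sqrt; lra).
  assert (Hs0 : 0 < s) by (apply sqrt_lt_R0; lra).
  apply Rlt_gt. apply Rmult_lt_reg_r with s; auto.
  replace ((1 * 1 + 1 * p) / s * s) with (1 + p) by (field; lra).
  destruct (Rle_lt_dec eta 1).
  - assert (E1 : s * s = (1+p)*(1+p) + (dot n u u - p * p)) by (rewrite Hs, Hvv; ring).
    assert (E2 : 1/4 <= (1+p)*(1+p)) by nra.
    assert (E3 : eta <= 2 * eta - eta * eta) by nra.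
    assert (E4 : (1-eta)*(1-eta) <= 1) by nra.
    assert (E5 : 0 <= dot n u u - p * p) by lra.
    assert ((1 - eta) * (1 - eta) * (s * s) < (1 + p) * (1 + p)).
    { rewrite E1. assert ((1-eta)*(1-eta) * (dot n u u - p*p) <= d) by nra. nra. }
    nra.
  - nra.
Qed.

Lemma sd1 n eps : eps > 0 -> exists eta, eta > 0 /\ forall x y, sphere n x -> sphere n y ->
  dot n x y > 1 - eta -> sdist n x y < eps.
Proof.
  intros He. pose proof PI_RGT_0. set (e := Rmin eps PI).
  assert (He0 : 0 < e) by (unfold e; apply Rmin_glb_lt; lra).
  assert (He1 : e <= PI) by apply Rmin_r. assert (He2 : e <= eps) by apply Rmin_l.
  assert (Hc : cos e < 1). { rewrite <- cos_0. apply cos_decreasing_1; lra. }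
  exists (1 - cos e); split. lra.
  intros x y Hx Hy Hd. pose proof (unit_bound n x y Hx Hy). unfold sdist.
  set (d := dot n x y) in *. pose proof (acos_bound d).
  destruct (Rlt_le_dec (acos d) e). lra.
  exfalso. destruct (Req_dec (acos d) e) as [E|E].
  - rewrite <- E, cos_acos in Hd; lra.
  - assert (Hq : cos (acos d) < cos e) by (apply cos_decreasing_1; lra). rewrite cos_acos in Hq; lra.
Qed.

Lemma sd1le n r : r > 0 -> exists eta, eta > 0 /\ forall x y, sphere n x -> sphere n y ->
  dot n x y >= 1 - eta -> sdist n x y <= r.
Proof.
  intros He. pose proof PI_RGT_0. set (e := Rmin r PI).
  assert (He0 : 0 < e) by (unfold e; apply Rmin_glb_lt; lra).
  assert (He1 : e <= PI) by apply Rmin_r. assert (He2 : e <= r) by apply Rmin_l.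
  assert (Hc : cos e < 1). { rewrite <- cos_0. apply cos_decreasing_1; lra. }
  exists (1 - cos e); split. lra.
  intros x y Hx Hy Hd. pose proof (unit_bound n x y Hx Hy). unfold sdist.
  set (d := dot n x y) in *. pose proof (acos_bound d).
  destruct (Rle_lt_dec (acos d) e). lra.
  exfalso.
  assert (Hq : cos (acos d) < cos e) by (apply cos_decreasing_1; lra). rewrite cos_acos in Hq; lra.
Qed.

Lemma sd2 n eta : eta > 0 -> exists eps, eps > 0 /\ forall x y, sphere n x -> sphere n y ->
  sdist n x y < eps -> dot n x y > 1 - eta.
Proof.
  intros He. pose proof PI_RGT_0. set (e := Rmin eta 1).
  assert (He0 : 0 < e) by (unfold e; apply Rmin_glb_lt; lra).
  assert (He1 : e <= 1) by apply Rmin_r. assert (He2 : e <= eta) by apply Rmin_l.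
  exists (acos (1 - e)). pose proof (acos_bound (1 - e)). split.
  - destruct (Req_dec (acos (1-e)) 0) as [E|E]. 2: lra.
    exfalso. assert (Hq : cos (acos (1-e)) = 1) by (rewrite E; apply cos_0).
    rewrite cos_acos in Hq; lra.
  - intros x y Hx Hy Hd. pose proof (unit_bound n x y Hx Hy). unfold sdist in Hd.
    set (d := dot n x y) in *. pose proof (acos_bound d).
    assert (Hq : cos (acos (1-e)) < cos (acos d)) by (apply cos_decreasing_1; lra).
    rewrite !cos_acos in Hq; lra.
Qed.

Lemma sclosed_intro n W : subset_of W (sphere n) ->
  (forall x, sphere n x -> (forall eta, eta > 0 -> exists y, W y /\ dot n x y > 1 - eta) -> W x) -> sclosed n W.
Proof.
  intros HS H x Hx Happ. apply H; auto. intros eta Heta.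
  destruct (sd2 n eta Heta) as [eps [Heps Hsd]].
  destruct (Happ eps Heps) as [y [Wy Hy]].
  exists y. split; auto.
Qed.

Lemma sclosed_elim n W x : sclosed n W -> subset_of W (sphere n) -> sphere n x ->
  (forall eta, eta > 0 -> exists y, W y /\ dot n x y > 1 - eta) -> W x.
Proof.
  intros Hc HS Hx Happ. apply Hc; auto. intros eps Heps.
  destruct (sd1 n eps Heps) as [eta [Heta Hsd]].
  destruct (Happ eta Heta) as [y [Wy Hy]].
  exists y. split; auto.
Qed.

Lemma lim_ge n a c x : sphere n x ->
  (forall eta, eta > 0 -> exists y, sphere n y /\ dot n a y >= c /\ dot n x y > 1 - eta) ->
  dot n a x >= c.
Proof.
  intros Hx H. destruct (Rge_dec (dot n a x) c) as [|Hlt]; auto. exfalso.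
  set (g := c - dot n a x). assert (Hg : 0 < g) by (unfold g; lra).
  pose proof (dot_pos n a).
  destruct (H (g * g / (2 * (dot n a a + 1)))) as [y [Hy [Hay Hxy]]].
  { apply Rlt_gt. apply Rdiv_lt_0_compat; nra. }
  pose proof (dot_diff n a x y Hx Hy) as D.
  assert (Hk : 2 * (dot n a a + 1) * (1 - dot n x y) < g * g).
  { assert (1 - dot n x y < g * g / (2 * (dot n a a + 1))) by lra.
    apply Rmult_lt_compat_l with (r := 2 * (dot n a a + 1)) in H1. 2: lra.
    replace (2 * (dot n a a + 1) * (g * g / (2 * (dot n a a + 1)))) with (g*g) in H1 by (field; lra). lra. }
  pose proof (unit_bound n x y Hx Hy).
  assert (g <= dot n a y - dot n a x) by (unfold g; lra).
  assert (g * g <= (dot n a x - dot n a y) * (dot n a x - dot n a y)) by nra.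
  nra.
Qed.

Fixpoint iter_sub (f : nat -> nat) (k : nat) : nat :=
  match k with O => f O | S k => f (S (iter_sub f k)) end.

Lemma incr_ge (psi : nat -> nat) : (forall k, (psi k < psi (S k))%nat) -> forall k, (k <= psi k)%nat.
Proof. intros H k; induction k. lia. specialize (H k). lia. Qed.

Lemma incr_mono (psi : nat -> nat) : (forall k, (psi k < psi (S k))%nat) -> forall a b, (a < b)%nat -> (psi a < psi b)%nat.
Proof. intros H a b Hab; induction Hab. apply H. specialize (H m). lia. Qed.

Lemma cv_sub (u : nat -> R) l psi : Un_cv u l -> (forall k, (psi k < psi (S k))%nat) -> Un_cv (fun k => u (psi k)) l.
Proof.
  intros Hu Hp eps He. destruct (Hu eps He) as [N HN]. exists N. intros k Hk.
  apply HN. pose proof (incr_ge psi Hp k). lia.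
Qed.

Lemma inv_small eps : eps > 0 -> exists N, forall k, (k >= N)%nat -> / (INR k + 1) < eps.
Proof.
  intros He. destruct (INR_unbounded (/ eps)) as [N HN]. exists N. intros k Hk.
  apply le_INR in Hk. pose proof (pos_INR N).
  assert (0 < /eps) by (apply Rinv_0_lt_compat; lra).
  rewrite <- (Rinv_inv eps). apply Rinv_lt_contravar; nra.
Qed.

Lemma bw1 (u : nat -> R) M : (forall k, Rabs (u k) <= M) ->
  exists psi : nat -> nat, (forall k, (psi k < psi (S k))%nat) /\ exists l, Un_cv (fun k => u (psi k)) l.
Proof.
  intros HM.
  destruct (Bolzano_Weierstrass u (fun c => -M <= c <= M) (compact_P3 (-M) M)) as [l Hl].
  { intros k. specialize (HM k). pose proof (Rle_abs (u k)); pose proof (Rle_abs (- u k)); rewrite Rabs_Ropp in *; lra. }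
  assert (H1 : forall N : nat, exists p, (N <= p)%nat /\ Rabs (u p - l) < / (INR N + 1)).
  { intros N. assert (Hd : 0 < / (INR N + 1)) by (apply Rinv_0_lt_compat; pose proof (pos_INR N); lra).
    destruct (Hl (disc l (mkposreal _ Hd)) N) as [p [Hp1 Hp2]].
    - exists (mkposreal _ Hd). intros y Hy; exact Hy.
    - exists p; split; auto. }
  pose (f := fun N => proj1_sig (constructive_indefinite_description _ (H1 N))).
  assert (Hf : forall N, (N <= f N)%nat /\ Rabs (u (f N) - l) < / (INR N + 1)).
  { intros N. unfold f. destruct (constructive_indefinite_description _ (H1 N)); simpl; auto. }
  exists (iter_sub f). assert (Hinc : forall k, (iter_sub f k < iter_sub f (S k))%nat).
  { intros k. change (iter_sub f (S k)) with (f (S (iter_sub f k))). destruct (Hf (S (iter_sub f k))). lia. }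
  split; auto. exists l.
  assert (Hb : forall k, Rabs (u (iter_sub f k) - l) < / (INR k + 1)).
  { intros [|k]. change (iter_sub f 0) with (f 0%nat). destruct (Hf 0%nat); auto.
    change (iter_sub f (S k)) with (f (S (iter_sub f k))).
    destruct (Hf (S (iter_sub f k))) as [_ H2]. eapply Rlt_le_trans. apply H2.
    apply Rinv_le_contravar. pose proof (pos_INR (S k)); lra.
    apply Rplus_le_compat_r. apply le_INR. pose proof (incr_ge _ Hinc k). lia. }
  intros eps He. destruct (inv_small eps He) as [N HN]. exists N. intros k Hk.
  unfold Rdist. eapply Rlt_trans. apply Hb. apply HN; auto.
Qed.

Lemma bwv (u : nat -> vec) M : (forall k i, Rabs (u k i) <= M) ->
  forall m, exists phi : nat -> nat, (forall k, (phi k < phi (S k))%nat) /\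
   exists l : vec, forall i, (i < m)%nat -> Un_cv (fun k => u (phi k) i) (l i).
Proof.
  intros HM m. induction m.
  - exists (fun k => k). split. intros; lia. exists (fun _ => 0). intros; lia.
  - destruct IHm as [phi [Hphi [l Hl]]].
    destruct (bw1 (fun k => u (phi k) m) M) as [psi [Hpsi [c Hc]]]. { intros; apply HM. }
    exists (fun k => phi (psi k)). split.
    + intros k. apply incr_mono; auto.
    + exists (fun i => if Nat.eqb i m then c else l i). intros i Hi.
      destruct (Nat.eqb_spec i m) as [->|Hne]. exact Hc.
      apply (cv_sub (fun k => u (phi k) i)). apply Hl; lia. auto.
Qed.

Lemma cv_dot n (x y : nat -> vec) (l m : vec) :
  (forall i, (i <= n)%nat -> Un_cv (fun k => x k i) (l i)) ->
  (forall i, (i <= n)%nat -> Un_cv (fun k => y k i) (m i)) ->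
  Un_cv (fun k => dot n (x k) (y k)) (dot n l m).
Proof.
  intros Hx Hy. unfold dot. induction n; simpl.
  - apply CV_mult; auto.
  - apply CV_plus. apply IHn; intros; [apply Hx | apply Hy]; lia.
    apply CV_mult; auto.
Qed.

Lemma cv_const (c : R) : Un_cv (fun _ => c) c.
Proof. intros eps He. exists 0%nat. intros; unfold Rdist. rewrite Rminus_diag, Rabs_R0. lra. Qed.

Lemma cv_inv0 : Un_cv (fun k => / (INR k + 1)) 0.
Proof.
  intros eps He. destruct (inv_small eps He) as [N HN]. exists N. intros k Hk. unfold Rdist.
  rewrite Rminus_0_r, Rabs_pos_eq. apply HN; auto.
  apply Rlt_le, Rinv_0_lt_compat. pose proof (pos_INR k); lra.
Qed.

Lemma attain n W a : subset_of W (sphere n) -> nonempty W -> sclosed n W ->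
  exists w0, W w0 /\ forall w, W w -> dot n a w <= dot n a w0.
Proof.
  intros HS [w1 Hw1] Hcl.
  set (E := fun r => exists w, W w /\ r = dot n a w).
  assert (Hb : bound E).
  { exists ((dot n a a + 1)/2). intros r [w [Hw ->]].
    pose proof (dot_pos n (lin 1 a (-1) w)) as H. rewrite dot_lin, !dot_linr, (dot_sym n w a) in H.
    destruct (HS w Hw) as [_ Hww]. rewrite Hww in H. lra. }
  destruct (completeness E Hb (ex_intro _ (dot n a w1) (ex_intro _ w1 (conj Hw1 eq_refl)))) as [s [Hub Hlub]].
  assert (H2 : forall k : nat, exists w, W w /\ dot n a w > s - / (INR k + 1)).
  { intros k. apply NNPP; intros Hn.
    assert (Hd : 0 < / (INR k + 1)) by (apply Rinv_0_lt_compat; pose proof (pos_INR k); lra).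
    assert (is_upper_bound E (s - / (INR k + 1))).
    { intros r [w [Hw ->]]. apply Rnot_lt_le; intros Hl. apply Hn. exists w; split; auto. }
    apply Hlub in H. lra. }
  pose (u := fun k => proj1_sig (constructive_indefinite_description _ (H2 k))).
  assert (Hu : forall k, W (u k) /\ dot n a (u k) > s - / (INR k + 1)).
  { intros k. unfold u. destruct (constructive_indefinite_description _ (H2 k)); simpl; auto. }
  assert (Hbd : forall k i, Rabs (u k i) <= 1).
  { intros k i. destruct (HS _ (proj1 (Hu k))) as [Hsu Hdu].
    destruct (Compare_dec.le_lt_dec i n) as [Hi|Hi].
    - pose proof (dot_coord n (u k) i Hi). rewrite Hdu in H.
      apply Rabs_le; nra.
    - rewrite Hsu by auto. rewrite Rabs_R0; lra. }
  destruct (bwv u 1 Hbd (S n)) as [phi [Hphi [l Hl]]].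
  pose (l' := fun i => if Nat.leb i n then l i else 0).
  assert (Hl' : forall i, (i <= n)%nat -> Un_cv (fun k => u (phi k) i) (l' i)).
  { intros i Hi. unfold l'. rewrite (proj2 (Nat.leb_le i n) Hi). apply Hl; lia. }
  assert (Hsupp : supp n l'). { intros i Hi. unfold l'. rewrite (proj2 (Nat.leb_gt i n) Hi). auto. }
  assert (Hd1 : Un_cv (fun k => dot n (u (phi k)) (u (phi k))) (dot n l' l')) by (apply cv_dot; auto).
  assert (Hll : dot n l' l' = 1).
  { apply (UL_sequence (fun k => dot n (u (phi k)) (u (phi k)))); auto.
    replace (fun k => dot n (u (phi k)) (u (phi k))) with (fun _ : nat => 1).
    apply cv_const. apply functional_extensionality; intros k.
    destruct (HS _ (proj1 (Hu (phi k)))). auto. }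
  assert (Hsl : sphere n l') by (split; auto).
  assert (Hwl : W l').
  { apply (sclosed_elim n W l' Hcl HS Hsl). intros eta Heta.
    assert (Hc : Un_cv (fun k => dot n l' (u (phi k))) (dot n l' l')).
    { apply (cv_dot n (fun _ => l')); auto. intros; apply cv_const. }
    destruct (Hc eta Heta) as [N HN]. specialize (HN N (le_n N)). unfold Rdist in HN.
    exists (u (phi N)). split. apply Hu. rewrite Hll in *. apply Rabs_def2 in HN. lra. }
  exists l'. split; auto.
  assert (Hs : s <= dot n a l').
  { apply Rle_cv_lim with (Un := fun k => s - / (INR k + 1)) (Vn := fun k => dot n a (u (phi k))).
    - intros k. destruct (Hu (phi k)) as [_ Hk].
      assert (/ (INR (phi k) + 1) <= / (INR k + 1)).
      { apply Rinv_le_contravar. pose proof (pos_INR k); lra. apply Rplus_le_compat_r, le_INR, incr_ge; auto. }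
      lra.
    - pose proof (CV_minus (fun _ => s) (fun k => / (INR k + 1)) s 0 (cv_const s) cv_inv0) as Hc.
      rewrite Rminus_0_r in Hc. exact Hc.
    - apply (cv_dot n (fun _ => a)); auto. intros; apply cv_const. }
  intros w Hw. apply Rle_trans with s; auto. apply Hub. exists w; split; auto.
Qed.

Definition cvx n (W : set) : Prop := forall a b, W a -> W b -> forall s t, 0 <= s -> 0 <= t ->
  0 < dot n (lin s a t b) (lin s a t b) -> W (nrmz n (lin s a t b)).

Lemma sqrt_facts N : 0 < N -> sqrt N * sqrt N = N /\ 0 < sqrt N.
Proof. intros H; split. apply sqrt_sqrt; lra. apply sqrt_lt_R0; auto. Qed.

Lemma var_ineq n W x w0 w : subset_of W (sphere n) -> cvx n W -> sphere n x -> W w0 ->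
  (forall w, W w -> dot n x w <= dot n x w0) -> 0 < dot n x w0 -> W w ->
  dot n x w <= dot n x w0 * dot n w0 w.
Proof.
  intros HS Hc Hx Hw0 Hmax Hm Hw.
  set (m := dot n x w0) in *. set (a := dot n w0 w). set (b := dot n x w).
  pose proof (HS _ Hw0) as Sw0. pose proof (HS _ Hw) as Sw.
  pose proof (unit_bound n w0 w Sw0 Sw) as Ba. fold a in Ba.
  pose proof (unit_bound n x w Hx Sw) as Bb. fold b in Bb.
  pose proof (unit_bound n x w0 Hx Sw0) as Bm. fold m in Bm.
  apply Rnot_lt_le; intros Hlt.
  set (g := m * (b - m * a)). assert (Hg : 0 < g) by (unfold g; nra).
  set (t := Rmin (1/4) (Rmin (g/2) (m/2))).
  assert (Ht0 : 0 < t) by (unfold t; repeat apply Rmin_glb_lt; lra).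
  assert (Ht1 : t <= 1/4) by apply Rmin_l.
  assert (Ht2 : t <= g/2) by (unfold t; eapply Rle_trans; [apply Rmin_r | apply Rmin_l]).
  assert (Ht3 : t <= m/2) by (unfold t; eapply Rle_trans; [apply Rmin_r | apply Rmin_r]).
  set (v := lin (1-t) w0 t w).
  assert (Hvv : dot n v v = (1-t)*(1-t) + 2*t*(1-t)*a + t*t).
  { unfold v. rewrite dot_lin, !dot_linr, (dot_sym n w w0). fold a.
    rewrite (proj2 Sw0), (proj2 Sw). ring. }
  assert (HN : 0 < dot n v v).
  { rewrite Hvv. assert (0 < t * (1-t)) by nra. assert (2*t*(1-t)*a >= -2*(t*(1-t))) by nra. nra. }
  assert (Hin : W (nrmz n v)) by (apply Hc; auto; lra).
  pose proof (Hmax _ Hin) as Hle. fold m in Hle.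
  rewrite dot_sym, dot_nrmz in Hle.
  replace (dot n v x) with ((1-t)*m + t*b) in Hle by (unfold v; rewrite dot_lin, (dot_sym n w0 x), (dot_sym n w x); fold m b; ring).
  destruct (sqrt_facts _ HN) as [HS2 HS0]. set (S := sqrt (dot n v v)) in *.
  assert (Hle2 : (1-t)*m + t*b <= m * S).
  { apply Rmult_le_compat_r with (r := S) in Hle. 2: lra.
    replace (((1 - t) * m + t * b) / S * S) with ((1-t)*m + t*b) in Hle by (field; lra). lra. }
  assert (Hpos : 0 < (1-t)*m + t*b) by nra.
  assert (Hsq : ((1-t)*m + t*b) * ((1-t)*m + t*b) <= m*m*(S*S)) by nra.
  rewrite HS2, Hvv in Hsq.
  assert (E : m*m*((1-t)*(1-t) + 2*t*(1-t)*a + t*t) - ((1-t)*m + t*b) * ((1-t)*m + t*b)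
     = -(2*t*(1-t)*g) + t*t*(m*m - b*b)) by (unfold g; ring).
  assert (H1 : 2*t*(1-t)*g <= t*t*(m*m - b*b)) by lra.
  assert (H2a : m*m - b*b <= 1) by nra.
  assert (H2 : t*t*(m*m - b*b) <= t*t*1) by (apply Rmult_le_compat_l; nra).
  assert (H3 : t * (2*(1-t)*g) <= t * t) by lra.
  apply Rmult_le_reg_l in H3; auto.
  nra.
Qed.

Lemma sep n W x eta : subset_of W (sphere n) -> nonempty W -> sclosed n W -> cvx n W ->
  sphere n x -> 0 < eta -> eta <= 1 -> (forall w, W w -> dot n x w <= 1 - eta) ->
  exists Q, sphere n Q /\ (forall w, W w -> dot n Q w >= 0) /\ dot n Q x < 0 /\ eta <= dot n Q x * dot n Q x.
Proof.
  intros HS Hne Hcl Hc Hx He1 He2 Hfar.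
  destruct (attain n W x HS Hne Hcl) as [w0 [Hw0 Hmax]].
  set (m := dot n x w0) in *. pose proof (Hfar _ Hw0) as Hm. fold m in Hm.
  destruct (Rle_lt_dec m 0) as [Hm0|Hm0].
  - exists (vopp x). split. apply sphere_vopp; auto. rewrite dot_vopp, (proj2 Hx).
    split. intros w Hw. rewrite dot_vopp. pose proof (Hmax w Hw). lra. lra.
  - set (v := lin m w0 (-1) x).
    pose proof (HS _ Hw0) as Sw0.
    assert (Hvv : dot n v v = 1 - m*m).
    { unfold v. rewrite dot_lin, !dot_linr.
      rewrite (proj2 Sw0), (proj2 Hx), (dot_sym n w0 x). fold m. ring. }
    pose proof (unit_bound n x w0 Hx Sw0). fold m in H.
    assert (HN : 0 < dot n v v) by (rewrite Hvv; nra).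
    destruct (sqrt_facts _ HN) as [HS2 HS0]. set (S := sqrt (dot n v v)) in *.
    exists (nrmz n v). split. apply sphere_nrmz; auto. apply supp_lin; [apply Sw0|apply Hx].
    rewrite !dot_nrmz. fold S. unfold v. rewrite !dot_lin, (dot_sym n w0 x). fold m. rewrite (proj2 Hx).
    split.
    + intros w Hw. pose proof (var_ineq n W x w0 w HS Hc Hx Hw0 Hmax Hm0 Hw). fold m in H0.
      rewrite dot_nrmz, dot_lin. change (sqrt (dot n (lin m w0 (-1) x) (lin m w0 (-1) x))) with S. apply Rle_ge. apply Rmult_le_reg_r with S; auto. rewrite Rmult_0_l.
      replace ((m * dot n w0 w + -1 * dot n x w) / S * S) with (m * dot n w0 w + -1 * dot n x w) by (field; lra). lra.
    + split.
      * apply Rmult_lt_reg_r with S; auto. rewrite Rmult_0_l.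
        replace ((m * m + -1 * 1) / S * S) with (m * m + -1 * 1) by (field; lra). nra.
      * replace ((m * m + -1 * 1) / S * ((m * m + -1 * 1) / S)) with ((1 - m*m) * (1 - m*m) / (S*S)) by (field; lra).
        rewrite HS2, Hvv. replace ((1 - m * m) * (1 - m * m) / (1 - m * m)) with (1 - m*m) by (field; nra). nra.
Qed.

Lemma polar_sub n W : subset_of (polar n W) (sphere n).
Proof. intros x [H _]; auto. Qed.

Lemma polar_closed n W : sclosed n (polar n W).
Proof.
  apply sclosed_intro. apply polar_sub.
  intros x Hx Happ. split; auto. intros w Hw. split; auto.
  apply lim_ge; auto. intros eta Heta. destruct (Happ eta Heta) as [y [[Sy Hy] Hxy]].
  exists y. split; auto. split; auto. apply Hy; auto.
Qed.

Lemma polar_cvx n W : cvx n (polar n W).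
Proof.
  intros a b [Sa Ha] [Sb Hb] s t Hs Ht Hv. split.
  apply sphere_nrmz; auto. apply supp_lin; [apply Sa|apply Sb].
  intros w Hw. split. apply sphere_nrmz; auto. apply supp_lin; [apply Sa|apply Sb].
  rewrite dot_sym, dot_nrmz, dot_lin. destruct (Ha w Hw) as [_ H1]. destruct (Hb w Hw) as [_ H2].
  rewrite (dot_sym n a w), (dot_sym n b w). destruct (sqrt_facts _ Hv) as [_ HS0].
  apply Rle_ge. unfold Rdiv. apply Rmult_le_pos. nra. apply Rlt_le, Rinv_0_lt_compat; auto.
Qed.

Lemma bipolar n W : subset_of W (sphere n) -> nonempty W -> sclosed n W -> cvx n W ->
  seteq (polar n (polar n W)) W.
Proof.
  intros HS Hne Hcl Hc x. split.
  - intros [Hx Hpp]. apply NNPP; intros Hnx.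
    destruct (attain n W x HS Hne Hcl) as [w0 [Hw0 Hmax]].
    set (m := dot n x w0) in *.
    pose proof (unit_bound n x w0 Hx (HS _ Hw0)). fold m in H.
    assert (Hm1 : m < 1).
    { destruct (Req_dec m 1) as [E|E]. 2: lra. exfalso. apply Hnx.
      rewrite (unit_eq n x w0 Hx (HS _ Hw0) E). auto. }
    destruct (sep n W x (Rmin (1 - m) 1) HS Hne Hcl Hc Hx) as [Q [SQ [HQ [HQx _]]]].
    + apply Rmin_glb_lt; lra.
    + apply Rmin_r.
    + intros w Hw. pose proof (Hmax w Hw). pose proof (Rmin_l (1-m) 1). fold m in H0. lra.
    + assert (PQ : polar n W Q).
      { split; auto. intros w Hw. split; auto. rewrite dot_sym. apply HQ; auto. }
      destruct (Hpp Q PQ) as [_ HH]. lra.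
  - intros Hw. split. apply HS; auto. intros Q [SQ HQ]. split. apply HS; auto.
    destruct (HQ x Hw) as [_ H]. rewrite dot_sym; auto.
Qed.

Lemma arcpt_eq n A B t : arcpt n A B t = nrmz n (lin (1-t) A t B).
Proof. reflexivity. Qed.

Lemma vv_pos_of n P v : dot n P v > 0 -> 0 < dot n v v.
Proof.
  intros H. destruct (Rle_lt_dec (dot n v v) 0) as [Hle|]; auto.
  pose proof (dot_pos n v). assert (dot n v v = 0) by lra.
  rewrite dot_sym, dot_zero_l in H. lra. apply dot_zero; auto.
Qed.

Lemma pos_of_notneg n P x : sphere n x -> ~ hemi n (vopp P) x -> dot n P x > 0.
Proof.
  intros Hx Hn. apply Rnot_le_gt; intros Hle. apply Hn. split; auto. rewrite dot_vopp. lra.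
Qed.

Lemma wulff_props n P W : HWulff n P W ->
  subset_of W (sphere n) /\ nonempty W /\ sclosed n W /\ cvx n W /\
  (forall x, W x -> dot n P x > 0) /\ interior_pt n W P.
Proof.
  intros [[HS [Hne Hcl]] [Hdis [Hint [[Hhemi Harc] _]]]].
  assert (Hpos : forall x, W x -> dot n P x > 0) by (intros x Hx; apply pos_of_notneg; auto).
  split; auto. split; auto. split; auto. split; [|split; auto].
  intros a b Ha Hb s t Hs Ht Hv.
  assert (Hst : 0 < s + t).
  { destruct (Rle_lt_dec (s+t) 0); auto. assert (s = 0) by lra. assert (t = 0) by lra. subst.
    exfalso. rewrite dot_lin, !dot_linr in Hv. lra. }
  set (tau := t / (s+t)).
  assert (Htau : 0 <= tau <= 1).
  { unfold tau; split. apply Rmult_le_pos; auto. apply Rlt_le, Rinv_0_lt_compat; auto.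
    apply Rmult_le_reg_r with (s+t); auto. unfold Rdiv. rewrite Rmult_assoc, Rinv_l; lra. }
  pose proof (Harc a b Ha Hb tau Htau) as H. rewrite arcpt_eq in H.
  replace (lin (1-tau) a tau b) with (lin (/(s+t)) (lin s a t b) 0 (lin s a t b)) in H.
  rewrite nrmz_scal in H; auto. apply Rinv_0_lt_compat; auto.
  apply functional_extensionality; intros i. unfold lin, tau. field. lra.
Qed.

Lemma wulff_intro n P W : sphere n P -> subset_of W (sphere n) -> sclosed n W -> cvx n W ->
  (forall x, W x -> dot n P x > 0) -> interior_pt n W P -> HWulff n P W.
Proof.
  intros SP HS Hcl Hc Hpos Hint.
  assert (Hdis : forall x, W x -> ~ hemi n (vopp P) x).
  { intros x Hx [_ H]. rewrite dot_vopp in H. pose proof (Hpos x Hx). lra. }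
  split. split; auto. split; auto. exists P; apply Hint.
  split; auto. split; auto. split. 2: split; auto; exists P; auto.
  split. exists (vopp P). split; auto. apply sphere_vopp; auto.
  intros A B HA HB t Ht. rewrite arcpt_eq. apply Hc; auto; try lra.
  apply (vv_pos_of n P). rewrite dot_linr. pose proof (Hpos A HA). pose proof (Hpos B HB).
  destruct (Rle_lt_dec t 0). assert (t = 0) by lra. subst. nra. nra.
Qed.

Lemma polar_wulff n P W : sphere n P -> HWulff n P W -> HWulff n P (polar n W).
Proof.
  intros SP HW. destruct (wulff_props n P W HW) as [HS [Hne [Hcl [Hc [Hpos [HPW [eps0 [Heps0 Hball]]]]]]]].
  assert (HQpos : forall Q, polar n W Q -> dot n P Q > 0).
  { intros Q [SQ HQ].
    destruct (sd1 n eps0 Heps0) as [eta0 [Heta0 Hsd]].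
    set (delta := Rmin 1 eta0 / 4).
    assert (Hm1 : Rmin 1 eta0 <= 1) by apply Rmin_l. assert (Hm2 : Rmin 1 eta0 <= eta0) by apply Rmin_r.
    assert (Hm0 : 0 < Rmin 1 eta0) by (apply Rmin_glb_lt; lra).
    set (u := lin (-delta) Q 0 Q).
    assert (Huu : dot n u u = delta * delta).
    { unfold u. rewrite dot_lin, !dot_linr, (proj2 SQ). ring. }
    assert (Hd0 : 0 < delta) by (unfold delta; lra). assert (Hd1 : delta <= 1/4) by (unfold delta; lra).
    assert (Hd2 : delta <= eta0/4) by (unfold delta; lra).
    destruct (normnear n P u (delta*delta) eta0 SP) as [Hvv Hnear]; [lra|nra|nra|nra|].
    set (x := nrmz n (lin 1 P 1 u)) in *.
    assert (Sx : sphere n x). { apply sphere_nrmz; auto. apply supp_lin. apply SP. apply supp_lin; apply SQ. }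
    assert (Wx : W x) by (apply Hball; auto).
    destruct (HQ x Wx) as [_ HxQ]. unfold x in HxQ. rewrite dot_nrmz in HxQ.
    destruct (sqrt_facts _ Hvv) as [_ HS0].
    assert (HxQ' : 0 <= dot n (lin 1 P 1 u) Q).
    { apply Rnot_lt_le; intros Hlt. assert (dot n (lin 1 P 1 u) Q / sqrt (dot n (lin 1 P 1 u) (lin 1 P 1 u)) < 0).
      { unfold Rdiv. apply Rmult_neg_pos. auto. apply Rinv_0_lt_compat; auto. } lra. }
    unfold u in HxQ'. rewrite !dot_lin, (proj2 SQ) in HxQ'.
    assert (0 < delta) by (unfold delta; lra). lra. }
  apply wulff_intro; auto.
  - apply polar_sub.
  - apply polar_closed.
  - apply polar_cvx.
  -
    destruct (attain n W (vopp P) HS Hne Hcl) as [w0 [Hw0 Hmin]].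
    set (c := dot n P w0). assert (Hc0 : c > 0) by (apply Hpos; auto).
    assert (Hcw : forall w, W w -> dot n P w >= c).
    { intros w Hw. pose proof (Hmin w Hw). rewrite !dot_vopp in H. unfold c. lra. }
    split.
    + split; auto. intros w Hw. split; auto. rewrite dot_sym. pose proof (Hpos w Hw). lra.
    + destruct (sd2 n (c*c/2)) as [eps [Heps Hsd]]. nra.
      exists eps. split; auto. intros Q SQ HPQ. pose proof (Hsd P Q SP SQ HPQ) as HPQ'.
      split; auto. intros w Hw. split; auto.
      pose proof (dot_diff n w P Q SP SQ) as D. rewrite (proj2 (HS w Hw)) in D.
      pose proof (Hcw w Hw). rewrite (dot_sym n P w) in H.
      apply Rle_ge. apply Rnot_lt_le; intros Hlt. nra.
Qed.

Lemma sdist_sym n x y : sdist n x y = sdist n y x.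
Proof. unfold sdist; rewrite dot_sym; auto. Qed.

Lemma cl_near n P W eta : HWulff_cl n P W -> eta > 0 ->
  exists W', HWulff n P W' /\ (forall x, W x -> exists y, W' y /\ dot n x y > 1 - eta) /\
    (forall y, W' y -> exists x, W x /\ dot n x y > 1 - eta).
Proof.
  intros [[HS _] Hcl] He. destruct (sd2 n eta He) as [eps [Heps Hsd]].
  destruct (Hcl eps Heps) as [W' [HW' [r [Hr [H1 H2]]]]].
  destruct (wulff_props n P W' HW') as [HS' _].
  exists W'. split; auto. split.
  - intros x Hx. destruct (H1 x Hx) as [y [Hy Hd]]. exists y. split; auto. apply Hsd; auto; lra.
  - intros y Hy. destruct (H2 y Hy) as [x [Hx Hd]]. exists x. split; auto. apply Hsd; auto; lra.
Qed.

Lemma cl_props n P W : sphere n P -> HWulff_cl n P W ->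
  W P /\ (forall w, W w -> dot n P w >= 0) /\ cvx n W.
Proof.
  intros SP Hcl. pose proof Hcl as [[HS [Hne Hc]] Happ].
  split; [|split].
  - apply (sclosed_elim n W P Hc HS SP). intros eta He.
    destruct (cl_near n P W eta Hcl He) as [W' [HW' [_ H2]]].
    destruct (wulff_props n P W' HW') as [_ [_ [_ [_ [_ [HP _]]]]]].
    destruct (H2 P HP) as [x [Hx Hd]]. exists x. split; auto. rewrite dot_sym; auto.
  - intros w Hw. apply lim_ge. apply HS; auto. intros eta He.
    destruct (cl_near n P W eta Hcl He) as [W' [HW' [H1 _]]].
    destruct (wulff_props n P W' HW') as [HS' [_ [_ [_ [Hpos _]]]]].
    destruct (H1 w Hw) as [y [Hy Hd]]. exists y. split; auto. split; auto. pose proof (Hpos y Hy); lra.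
  - intros a b Ha Hb s t Hs Ht Hv.
    pose proof (HS a Ha) as Sa. pose proof (HS b Hb) as Sb.
    assert (Hsupp : supp n (lin s a t b)) by (apply supp_lin; [apply Sa|apply Sb]).
    set (v := lin s a t b) in *. set (c := nrmz n v).
    assert (Sc : sphere n c) by (apply sphere_nrmz; auto).
    destruct (sqrt_facts _ Hv) as [HS2 HS0]. set (S := sqrt (dot n v v)) in *.
    assert (Hst : 0 < s + t).
    { destruct (Rle_lt_dec (s+t) 0); auto. assert (s = 0) by lra. assert (t = 0) by lra.
      exfalso. unfold v in Hv. subst. rewrite dot_lin, !dot_linr in Hv. lra. }
    apply (sclosed_elim n W c Hc HS Sc). intros eta He.
    set (rho := Rmin (1/16) (eta/64)).
    assert (Hr0 : 0 < rho) by (unfold rho; apply Rmin_glb_lt; lra).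
    assert (Hr1 : rho <= 1/16) by apply Rmin_l. assert (Hr2 : rho <= eta/64) by apply Rmin_r.
    set (K := 4 * (s*s + t*t) + 1).
    assert (HK : 0 < K) by (unfold K; nra).
    set (eta1 := Rmin (dot n v v * rho / K) (eta/4)).
    assert (He1 : 0 < eta1).
    { unfold eta1; apply Rmin_glb_lt. apply Rdiv_lt_0_compat; nra. lra. }
    assert (He1a : eta1 <= dot n v v * rho / K) by apply Rmin_l.
    assert (He1b : eta1 <= eta / 4) by apply Rmin_r.
    destruct (cl_near n P W eta1 Hcl He1) as [W' [HW' [H1 H2]]].
    destruct (wulff_props n P W' HW') as [HS' [_ [_ [Hc' [Hpos' _]]]]].
    destruct (H1 a Ha) as [a' [Ha' Haa]]. destruct (H1 b Hb) as [b' [Hb' Hbb]].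
    pose proof (HS' a' Ha') as Sa'. pose proof (HS' b' Hb') as Sb'.
    set (v' := lin s a' t b').
    assert (Hv' : 0 < dot n v' v').
    { apply (vv_pos_of n P). unfold v'. rewrite dot_linr. pose proof (Hpos' a' Ha'). pose proof (Hpos' b' Hb').
      destruct (Rle_lt_dec s 0). assert (s = 0) by lra. subst. nra. nra. }
    set (u := lin (s / S) (lin 1 a' (-1) a) (t / S) (lin 1 b' (-1) b)).
    assert (Heq : lin 1 c 1 u = lin (/ S) v' 0 v').
    { apply functional_extensionality; intros i. unfold c, nrmz. fold S. unfold u, v', v, lin. unfold Rdiv. ring. }
    set (d := (4 * (s*s) * (1 - dot n a a') + 4 * (t*t) * (1 - dot n b b')) / dot n v v).
    assert (Hd : dot n u u <= d).
    { set (w := lin (s/S) (lin 1 a' (-1) a) (-(t/S)) (lin 1 b' (-1) b)).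
      pose proof (dot_pos n w) as Hp.
      set (cr := dot n a' b' - dot n a' b - dot n a b' + dot n a b).
      assert (Euu : dot n u u = (s/S)*(s/S)*(2 - 2*dot n a a') + (t/S)*(t/S)*(2 - 2*dot n b b') + 2*(s/S)*(t/S)*cr).
      { unfold u, cr. repeat rewrite ?dot_lin, ?dot_linr.
        rewrite (proj2 Sa), (proj2 Sb), (proj2 Sa'), (proj2 Sb').
        rewrite (dot_sym n a' a), (dot_sym n b' b), (dot_sym n b a), (dot_sym n b' a), (dot_sym n b a'), (dot_sym n b' a'). ring. }
      assert (Eww : dot n w w = (s/S)*(s/S)*(2 - 2*dot n a a') + (t/S)*(t/S)*(2 - 2*dot n b b') - 2*(s/S)*(t/S)*cr).
      { unfold w, cr. repeat rewrite ?dot_lin, ?dot_linr.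
        rewrite (proj2 Sa), (proj2 Sb), (proj2 Sa'), (proj2 Sb').
        rewrite (dot_sym n a' a), (dot_sym n b' b), (dot_sym n b a), (dot_sym n b' a), (dot_sym n b a'), (dot_sym n b' a'). ring. }
      assert (Ed : d = 2 * ((s/S)*(s/S)*(2 - 2*dot n a a') + (t/S)*(t/S)*(2 - 2*dot n b b'))).
      { unfold d. rewrite <- HS2. field. lra. }
      lra. }
    assert (Hdd : 0 <= d).
    { unfold d. apply Rmult_le_pos. 2: apply Rlt_le, Rinv_0_lt_compat; auto.
      pose proof (unit_bound n a a' Sa Sa'). pose proof (unit_bound n b b' Sb Sb'). nra. }
    assert (Hdr : d <= rho).
    { unfold d. apply Rmult_le_reg_r with (dot n v v); auto. unfold Rdiv. rewrite Rmult_assoc, Rinv_l by lra. rewrite Rmult_1_r.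
      assert (eta1 * K <= dot n v v * rho).
      { apply Rmult_le_reg_r with (/K). apply Rinv_0_lt_compat; auto.
        rewrite Rmult_assoc, Rinv_r by lra. unfold Rdiv in He1a. lra. }
      unfold K in H. nra. }
    destruct (normnear n c u d (eta/4) Sc Hd Hdd) as [_ Hcc]; try lra.
    rewrite Heq, nrmz_scal in Hcc; auto. 2: apply Rinv_0_lt_compat; auto.
    assert (Wc' : W' (nrmz n v')) by (apply Hc'; auto).
    destruct (H2 _ Wc') as [y [Hy Hyc]].
    exists y. split; auto.
    pose proof (near_tri n c (nrmz n v') y Sc (HS' _ Wc') (HS y Hy)). rewrite (dot_sym n y) in Hyc. lra.
Qed.

Lemma div_ge_lemma x S c : 0 < S -> c * S <= x -> c <= x / S.
Proof. intros HS H. apply Rmult_le_reg_r with S; auto. replace (x / S * S) with x by (field; lra). lra. Qed.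

Lemma approx n P W eta : sphere n P -> subset_of W (sphere n) -> sclosed n W -> cvx n W -> W P ->
  (forall w, W w -> dot n P w >= 0) -> 0 < eta -> eta <= 1 ->
  exists W', HWulff n P W' /\ (forall w, W w -> exists x, W' x /\ dot n w x > 1 - eta) /\
    (forall x, W' x -> exists w, W w /\ dot n w x > 1 - eta).
Proof.
  intros SP HS Hcl Hc HP HPw He0 He1.
  set (mu := eta / 4). set (rho := mu / 2). set (delta := eta / 2).
  assert (Hmu : 0 < mu) by (unfold mu; lra). assert (Hrho : 0 < rho) by (unfold rho; lra).
  assert (Hdel : 0 < delta) by (unfold delta; lra).
  set (W' := fun x => sphere n x /\ dot n P x >= rho /\
       forall Q, polar n W Q -> dot n Q x + delta * dot n P x >= 0).
  assert (HQP : forall Q, polar n W Q -> dot n Q P >= 0).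
  { intros Q [_ HQ]. destruct (HQ P HP) as [_ H]. rewrite dot_sym; auto. }
  exists W'. split; [|split].
  - apply wulff_intro; auto.
    + intros x [Hx _]; auto.
    + apply sclosed_intro. intros x [Hx _]; auto.
      intros x Hx Happ. split; auto. split.
      * apply lim_ge; auto. intros eta' He'. destruct (Happ eta' He') as [y [[Sy [Hy _]] Hxy]].
        exists y; auto.
      * intros Q HQ. replace (dot n Q x + delta * dot n P x) with (dot n (lin 1 Q delta P) x) by (rewrite dot_lin; ring).
        apply lim_ge; auto. intros eta' He'. destruct (Happ eta' He') as [y [[Sy [_ Hy]] Hxy]].
        exists y. split; auto. split; auto. rewrite dot_lin. specialize (Hy Q HQ). lra.
    + intros a b [Sa [Pa Qa]] [Sb [Pb Qb]] s t Hs Ht Hv.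
      assert (Hsupp : supp n (lin s a t b)) by (apply supp_lin; [apply Sa|apply Sb]).
      destruct (sqrt_facts _ Hv) as [HS2 HS0].
      split. apply sphere_nrmz; auto. split.
      * rewrite dot_sym, dot_nrmz, dot_lin, (dot_sym n a P), (dot_sym n b P).
        apply Rle_ge, div_ge_lemma; auto.
        assert (Hvv : dot n (lin s a t b) (lin s a t b) = s*s + 2*s*t*dot n a b + t*t).
        { rewrite dot_lin, !dot_linr, (proj2 Sa), (proj2 Sb), (dot_sym n b a). ring. }
        pose proof (unit_bound n a b Sa Sb).
        assert (sqrt (dot n (lin s a t b) (lin s a t b)) <= s + t).
        { set (S := sqrt (dot n (lin s a t b) (lin s a t b))) in *.
          assert (0 <= s*t*(1 - dot n a b)) by (apply Rmult_le_pos; nra).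
          assert (HSS : S*S <= (s+t)*(s+t)) by (rewrite HS2, Hvv; nra). nra. }
        assert (rho * sqrt (dot n (lin s a t b) (lin s a t b)) <= rho * (s+t)) by (apply Rmult_le_compat_l; lra).
        assert (s * rho <= s * dot n P a) by (apply Rmult_le_compat_l; lra).
        assert (t * rho <= t * dot n P b) by (apply Rmult_le_compat_l; lra).
        lra.
      * intros Q HQ. specialize (Qa Q HQ). specialize (Qb Q HQ).
        set (v := lin s a t b) in *. set (S := sqrt (dot n v v)) in *.
        rewrite (dot_sym n Q (nrmz n v)), (dot_sym n P (nrmz n v)), !dot_nrmz. fold S.
        replace (dot n v Q) with (s * dot n Q a + t * dot n Q b) by (unfold v; rewrite dot_lin, (dot_sym n a Q), (dot_sym n b Q); ring).
        replace (dot n v P) with (s * dot n P a + t * dot n P b) by (unfold v; rewrite dot_lin, (dot_sym n a P), (dot_sym n b P); ring).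
        replace ((s * dot n Q a + t * dot n Q b) / S + delta * ((s * dot n P a + t * dot n P b) / S))
          with ((s * (dot n Q a + delta * dot n P a) + t * (dot n Q b + delta * dot n P b)) / S)
          by (field; lra).
        apply Rle_ge, div_ge_lemma; auto. nra.
    + intros x [_ [H _]]. lra.
    + split.
      * split; auto. split. rewrite (proj2 SP). unfold rho, mu; lra.
        intros Q HQ. rewrite (proj2 SP). pose proof (HQP Q HQ). lra.
      * set (e := Rmin (1 - rho) (delta*delta/8)).
        assert (He : e > 0). { unfold e. apply Rmin_glb_lt. unfold rho, mu; lra. nra. }
        destruct (sd2 n e He) as [eps [Heps Hsd]]. exists eps. split; auto.
        intros x Sx Hpx. pose proof (Hsd P x SP Sx Hpx) as Hn.
        assert (e <= 1 - rho) by apply Rmin_l. assert (e <= delta*delta/8) by apply Rmin_r.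
        split; auto. split. lra.
        intros Q HQ. destruct HQ as [SQ HQ'].
        pose proof (dot_diff n (lin 1 Q delta P) P x SP Sx) as D.
        assert (EA : dot n (lin 1 Q delta P) P = dot n Q P + delta) by (rewrite dot_lin, (proj2 SP); ring).
        assert (EB : dot n (lin 1 Q delta P) x = dot n Q x + delta * dot n P x) by (rewrite dot_lin; ring).
        assert (Eaa : dot n (lin 1 Q delta P) (lin 1 Q delta P) = 1 + 2*delta*dot n Q P + delta*delta)
          by (rewrite dot_lin, !dot_linr, (proj2 SQ), (proj2 SP), (dot_sym n P Q); ring).
        rewrite EA, EB, Eaa in D.
        pose proof (HQP Q (conj SQ HQ')) as HQP'.
        pose proof (unit_bound n Q P SQ SP).
        assert (delta <= 1/2) by (unfold delta; lra).
        assert (Haa : 1 + 2*delta*dot n Q P + delta*delta <= 4) by nra.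
        assert (Hsm : 2 * (1 - dot n P x) < delta * delta / 4) by lra.
        assert (Hr : (1 + 2*delta*dot n Q P + delta*delta) * (2 * (1 - dot n P x)) < delta * delta).
        { pose proof (unit_bound n P x SP Sx). nra. }
        apply Rnot_lt_ge; intros Hlt.
        assert (dot n Q P + delta - (dot n Q x + delta * dot n P x) > delta) by lra.
        nra.
  - intros w Hw. pose proof (HS w Hw) as Sw.
    set (u := lin mu P 0 P).
    assert (Huu : dot n u u = mu * mu) by (unfold u; rewrite dot_lin, !dot_linr, (proj2 SP); ring).
    assert (Hmu1 : mu <= 1/4) by (unfold mu; lra).
    destruct (normnear n w u (mu*mu) eta Sw) as [Hvv Hnear]; [lra|nra|nra|unfold mu; nra|].
    exists (nrmz n (lin 1 w 1 u)). split; auto.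
    assert (Hsupp : supp n (lin 1 w 1 u)) by (apply supp_lin; [apply Sw|apply supp_lin; apply SP]).
    destruct (sqrt_facts _ Hvv) as [HS2 HS0].
    set (S := sqrt (dot n (lin 1 w 1 u) (lin 1 w 1 u))) in *.
    assert (Hvv' : dot n (lin 1 w 1 u) (lin 1 w 1 u) = 1 + 2*mu*dot n P w + mu*mu).
    { unfold u. repeat rewrite ?dot_lin, ?dot_linr. rewrite (proj2 Sw), (proj2 SP), (dot_sym n w P). ring. }
    pose proof (unit_bound n P w SP Sw). pose proof (HPw w Hw).
    assert (HS1 : S <= 2) by nra.
    split. apply sphere_nrmz; auto. split.
    + rewrite dot_sym, dot_nrmz. fold S.
      replace (dot n (lin 1 w 1 u) P) with (dot n P w + mu) by (unfold u; repeat rewrite ?dot_lin, ?dot_linr; rewrite (proj2 SP), (dot_sym n w P); ring).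
      apply Rle_ge, div_ge_lemma; auto. unfold rho. nra.
    + intros Q [SQ HQ]. rewrite (dot_sym n Q (nrmz n _)), (dot_sym n P (nrmz n _)), !dot_nrmz. fold S.
      replace (dot n (lin 1 w 1 u) P) with (dot n P w + mu) by (unfold u; repeat rewrite ?dot_lin, ?dot_linr; rewrite (proj2 SP), (dot_sym n w P); ring).
      replace (dot n (lin 1 w 1 u) Q) with (dot n Q w + mu * dot n P Q) by (unfold u; repeat rewrite ?dot_lin, ?dot_linr; rewrite (dot_sym n w Q), (dot_sym n P Q); ring).
      destruct (HQ w Hw) as [_ HwQ]. pose proof (HQP Q (conj SQ HQ)) as HQP'. rewrite (dot_sym n Q P) in HQP'.
      rewrite (dot_sym n w Q) in HwQ.
      replace ((dot n Q w + mu * dot n P Q) / S + delta * ((dot n P w + mu) / S))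
        with ((dot n Q w + mu * dot n P Q + delta * (dot n P w + mu)) / S) by (field; lra).
      apply Rle_ge, div_ge_lemma; auto. nra.
  - intros x [Sx [Hpx HQx]]. apply NNPP; intros Hno.
    assert (Hfar : forall w, W w -> dot n x w <= 1 - eta).
    { intros w Hw. apply Rnot_lt_le; intros Hlt. apply Hno. exists w. split; auto. rewrite dot_sym; lra. }
    destruct (sep n W x eta HS (ex_intro _ P HP) Hcl Hc Sx He0 He1 Hfar) as [Q [SQ [HQw [HQx0 HQx1]]]].
    assert (PQ : polar n W Q).
    { split; auto. intros w Hw. split; auto. rewrite dot_sym. apply HQw; auto. }
    pose proof (HQx Q PQ). pose proof (unit_bound n P x SP Sx).
    assert (dot n Q x >= - delta) by nra.
    assert (dot n Q x * dot n Q x <= delta * delta) by nra.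
    unfold delta in H2. nra.
Qed.

Lemma cl_intro n P W : sphere n P -> subset_of W (sphere n) -> sclosed n W -> cvx n W -> W P ->
  (forall w, W w -> dot n P w >= 0) -> HWulff_cl n P W.
Proof.
  intros SP HS Hcl Hc HP HPw. split. split; auto. split; auto. exists P; auto.
  intros eps Heps. destruct (sd1le n (eps/2)) as [er [Her Hsd]]. lra.
  destruct (approx n P W (Rmin er 1) SP HS Hcl Hc HP HPw) as [W' [HW' [H1 H2]]].
  apply Rmin_glb_lt; lra. apply Rmin_r.
  destruct (wulff_props n P W' HW') as [HS' _].
  assert (Hm : Rmin er 1 <= er) by apply Rmin_l.
  exists W'. split; auto. exists (eps/2). split. lra. split.
  - intros x Hx. destruct (H1 x Hx) as [y [Hy Hd]]. exists y. split; auto. apply Hsd; auto. lra.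
  - intros y Hy. destruct (H2 y Hy) as [x [Hx Hd]]. exists x. split; auto. apply Hsd; auto. lra.
Qed.

Lemma polar_seteq n A B : seteq A B -> seteq (polar n A) (polar n B).
Proof.
  intros H x. split; intros [Sx Hx]; split; auto; intros p Hp; apply Hx; apply H; auto.
Qed.

Lemma polar_of_cl n P W : sphere n P -> HWulff_cl n P W -> HWulff_cl n P (polar n W).
Proof.
  intros SP Hcl. destruct (cl_props n P W SP Hcl) as [HP [HPw Hc]].
  apply cl_intro; auto.
  - apply polar_sub.
  - apply polar_closed.
  - apply polar_cvx.
  - split; auto. intros w Hw. split; auto. rewrite dot_sym; auto.
  - intros Q [SQ HQ]. destruct (HQ P HP) as [_ H]. auto.
Qed.

Theorem proposition2 (n : nat) (P : vec) :
  (1 <= n)%nat -> sphere n P ->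
  (* (1) *)
  (forall W, HWulff_cl n P W -> HScirc n W) /\
  (* (2) ○(H_Wulff) = H_Wulff *)
  ((forall W, HWulff n P W -> HWulff n P (polar n W)) /\
   (forall W, HWulff n P W -> exists W', HWulff n P W' /\ seteq (polar n W') W)) /\
  (* (3) ○(closure) = closure *)
  ((forall W, HWulff_cl n P W -> HWulff_cl n P (polar n W)) /\
   (forall W, HWulff_cl n P W -> exists W', HWulff_cl n P W' /\ seteq (polar n W') W)) /\
  (* (4) injectivity on the closure *)
  (forall W1 W2, HWulff_cl n P W1 -> HWulff_cl n P W2 ->
     seteq (polar n W1) (polar n W2) -> seteq W1 W2).
Proof.
  intros _ SP.
  assert (BP : forall W, HWulff_cl n P W -> seteq (polar n (polar n W)) W).
  { intros W Hcl. pose proof Hcl as [[HS [Hne Hc]] _].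
    destruct (cl_props n P W SP Hcl) as [_ [_ Hcv]]. apply bipolar; auto. }
  split; [|split; [|split]].
  - intros W Hcl. pose proof Hcl as [HSW _]. split; auto.
    destruct (cl_props n P W SP Hcl) as [_ [HPw _]].
    exists P. split; auto. intros w Hw. split; auto. rewrite dot_sym; auto.
  - split.
    + intros W HW. apply polar_wulff; auto.
    + intros W HW. exists (polar n W). split. apply polar_wulff; auto.
      destruct (wulff_props n P W HW) as [HS [Hne [Hc [Hcv _]]]]. apply bipolar; auto.
  - split.
    + intros W Hcl. apply polar_of_cl; auto.
    + intros W Hcl. exists (polar n W). split. apply polar_of_cl; auto. apply BP; auto.
  - intros W1 W2 H1 H2 Heq x. rewrite <- (BP W1 H1 x), <- (BP W2 H2 x).
    apply polar_seteq; auto.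
Qed.
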